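(* Let $G=(V,E)$ be a graph with $n = |V| \ge \alpha$ nodes, let $\alpha,\beta>1$, $L=\lceil\log_\beta(n/\alpha)\rceil$, and let $\ell:V\to\{0,\dots,L\}$ be a level assignment with edge weights $w(u,v) = \beta^{-\max(\ell(u),\ell(v))}$ for $(u,v)\in E$ and node weights $W_v = \sum_{u \in \mathcal N_v} w(u,v)$ (where $\mathcal N_v$ is the neighbor set of $v$). Suppose that for every $v\in V$: if $\ell(v)=0$ then $W_v\le\alpha\beta$, and if $\ell(v)\ge 1$ then $1\le W_v\le \alpha\beta$. Then $V^* = \{v\in V: W_v\ge 1\}$ is a vertex cover of $G$, and $|V^*|$ is at most $2\alpha\beta$ times the size of a minimum vertex cover of $G$.
   Context: A vertex cover of $G$ is a set of nodes containing at least one endpoint of every edge. *)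

(* Defs.v *)
From mathcomp Require Import all_boot.
From Stdlib Require Import Reals ZArith.
Set Implicit Arguments. Unset Strict Implicit. Unset Printing Implicit Defensive.

(* ceiling of a real number: ceil x = - floor (-x); Int_part is floor *)
Definition Rceil (x : R) : Z := (- Int_part (- x))%Z.

Definition logb (b x : R) : R := (ln x / ln b)%R.

Definition simple_graph (V : finType) (e : rel V) : Prop :=
  symmetric e /\ irreflexive e.

Definition is_vertex_cover (V : finType) (e : rel V) (C : {set V}) : Prop :=
  forall u v, e u v -> (u \in C) || (v \in C).

Definition is_min_vertex_cover (V : finType) (e : rel V) (C : {set V}) : Prop :=
  is_vertex_cover e C /\ forall D : {set V}, is_vertex_cover e D -> #|C| <= #|D|.

Definition edge_weight (V : finType) (beta : R) (l : V -> nat) (u v : V) : R :=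
  (/ (beta ^ (maxn (l u) (l v))))%R.

Definition node_weight (V : finType) (e : rel V) (beta : R) (l : V -> nat) (v : V) : R :=
  \big[Rplus/0%R]_(u | e u v) edge_weight beta l u v.

Definition Rleb (x y : R) : bool := if Rle_dec x y then true else false.

(* Main.v *)
From Pilot Require Import Defs.
From mathcomp Require Import all_boot all_order all_algebra.
From mathcomp Require Import Rstruct lra.
From Stdlib Require Import Reals ZArith.
From mathcomp Require Import ring.
Import Pilot.Defs.
Import Order.TTheory GRing.Theory Num.Theory.

Section Aux.
Local Open Scope ring_scope.
Variables (V : finType) (e : rel V) (beta : R) (l : V -> nat).
Hypothesis (se : simple_graph e) (hb : 1 < beta).

Lemma w_gt0 u v : 0 < edge_weight beta l u v.
Proof.
rewrite /edge_weight RpowE RealsE invr_gt0 exprn_gt0 //.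
by apply: lt_trans hb.
Qed.

Lemma W_ge0 v : 0 <= node_weight e beta l v.
Proof. apply: sumr_ge0 => u _; exact: ltW (w_gt0 u v). Qed.

Lemma W_ge_w u v : e u v -> edge_weight beta l u v <= node_weight e beta l v.
Proof.
move=> huv; rewrite /node_weight (bigD1 u) //= lerDl.
apply: sumr_ge0 => x _; exact: ltW (w_gt0 x v).
Qed.

Lemma Wsym u : \sum_(v | e u v) edge_weight beta l u v = node_weight e beta l u.
Proof.
case: se => hs _.
rewrite /node_weight; apply: eq_big => v; first by rewrite hs.
by move=> _; rewrite /edge_weight maxnC.
Qed.
End Aux.

Lemma RlebP x y : reflect (Rle x y) (Rleb x y).
Proof. rewrite /Rleb; case: Rle_dec => h; constructor => //. Qed.

Theorem theorem2p5 (V : finType) (e : rel V) (alpha beta : R) (l : V -> nat) :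
  simple_graph e ->
  (1 < alpha)%R -> (1 < beta)%R ->
  (alpha <= INR #|V|)%R ->
  (forall v, (l v <= Z.to_nat (Rceil (logb beta (INR #|V| / alpha))))%nat) ->
  (forall v, l v = 0%nat -> (node_weight e beta l v <= alpha * beta)%R) ->
  (forall v, (1 <= l v)%nat ->
     (1 <= node_weight e beta l v)%R /\ (node_weight e beta l v <= alpha * beta)%R) ->
  let Vstar := [set v | Rleb 1 (node_weight e beta l v)] in
  is_vertex_cover e Vstar /\
  forall C : {set V}, is_min_vertex_cover e C ->
    (INR #|Vstar| <= 2 * alpha * beta * INR #|C|)%R.
Proof.
Local Open Scope ring_scope.
move=> se ha hb _ _ h0 h1 Vstar.
have ha' : (1 < alpha) by apply/RltP; exact: ha.
have hb' : (1 < beta) by apply/RltP; exact: hb.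
set W := node_weight e beta l.
set w := edge_weight beta l.
have Wab : forall v, (W v <= alpha * beta).
  move=> v; apply/RleP; case: (posnP (l v)) => hv.
    exact: h0.
  by case: (h1 v hv).
have inV : forall v, (1 <= W v) -> v \in Vstar.
  by move=> v /RleP hv; rewrite inE; apply/RlebP.
have inV' : forall v, v \in Vstar -> (1 <= W v).
  by move=> v; rewrite inE => /RlebP /RleP.
split.
  move=> u v huv.
  have hvu : e v u by case: se => hs _; rewrite hs.
  wlog hm : u v huv hvu / (l v <= l u)%nat.
    move=> H; case: (leqP (l v) (l u)) => hl; first exact: H.
    by rewrite orbC; apply: H => //; apply: ltnW.
  apply/orP; left; apply: inV.
  case: (posnP (l u)) => hu.
    apply: le_trans (@W_ge_w _ e beta l hb' _ _ hvu).
    rewrite /edge_weight hu.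
    have -> : l v = 0%nat by move: hm; rewrite hu; case: (l v).
    by rewrite RpowE RealsE expr0 invr1.
  by case: (h1 u hu) => /RleP.
move=> C [hC _].
rewrite !RealsE.
have step1 : (#|Vstar|%:R <= \sum_(v in Vstar) W v :> R).
  rewrite -sumr_const; apply: ler_sum => v; exact: inV'.
have step2 : (\sum_(v in Vstar) W v <= \sum_v W v :> R).
  rewrite [X in (_ <= X)](bigID (fun v => v \in Vstar)) /= lerDl.
  by apply: sumr_ge0 => v _; exact: (@W_ge0 _ e beta l hb' v).
have step3 : (\sum_v W v <= \sum_v (\sum_(u | e u v) (if u \in C then w u v else 0)
     + \sum_(u | e u v) (if v \in C then w u v else 0)) :> R).
  apply: ler_sum => v _; rewrite -big_split; apply: ler_sum => u huv.
  have := hC u v huv; have := ltW (@w_gt0 _ beta l hb' u v); rewrite -/w.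
  by case: (u \in C); case: (v \in C) => //= hw _; rewrite ?addr0 ?add0r // lerDl.
have eq4 : \sum_v \sum_(u | e u v) (if v \in C then w u v else 0)
    = \sum_(v in C) W v :> R.
  rewrite [RHS]big_mkcond; apply: eq_bigr => v _.
  by case: (v \in C) => //; rewrite big1.
have eq5 : \sum_v \sum_(u | e u v) (if u \in C then w u v else 0)
    = \sum_(u in C) W u :> R.
  rewrite (eq_bigr (fun v => \sum_u (if e u v then (if u \in C then w u v else 0) else 0)));
    last by move=> v _; rewrite big_mkcond.
  rewrite exchange_big /= [RHS]big_mkcond; apply: eq_bigr => u _.
  rewrite /W -(@Wsym _ e beta l se u) -/w; case: (u \in C); first by rewrite [RHS]big_mkcond.
  by rewrite big1 // => v _; case: (e u v).
have step6 : (\sum_(v in C) W v <= alpha * beta *+ #|C| :> R).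
  rewrite -sumr_const; apply: ler_sum => v _; exact: Wab.
rewrite big_split /= eq4 eq5 in step3.
apply/RleP. apply: le_trans step1 _; apply: le_trans step2 _; apply: le_trans step3 _.
apply: le_trans (lerD step6 step6) _.
rewrite le_eqVlt; apply/orP; left; apply/eqP; rewrite -mulr_natr /=; ring.
Qed.
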